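(* Let $n\in\mathbb{N}$, $A_n=\{(i,j)\in\mathbb{Z}^2:0\le i,j\le 14n\}$ and $\tau(x,y)=(x,(28n)^y)$. Let $p_1=(a_1,b_1)$, $p_2=(a_2,b_2)$, $p_3=(a_3,b_3)\in A_n$ with $\max(b_1,b_2)<b_3$, and let $\Box=(\min(a_1,a_2),\max(a_1,a_2))\times(\max(b_1,b_2),b_3)$ (an open axis-aligned rectangle, possibly empty). Then for every $p\in A_n\cap\Box$, the point $\tau(p)$ lies in the interior of the triangle with vertices $\tau(p_1),\tau(p_2),\tau(p_3)$. *)

(* Defs.v *)
From mathcomp Require Import all_boot all_order all_algebra.
Set Implicit Arguments. Unset Strict Implicit. Unset Printing Implicit Defensive.
Import Order.TTheory GRing.Theory Num.Theory.
Local Open Scope ring_scope.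

Definition in_A (n : nat) (p : int * int) : bool :=
  (0 <= p.1 <= (14 * n)%:Z) && (0 <= p.2 <= (14 * n)%:Z).

Definition tau (R : realFieldType) (n : nat) (p : int * int) : R * R :=
  (p.1%:~R, ((28 * n)%:R : R) ^ p.2).

Definition in_box (p1 p2 p3 p : int * int) : bool :=
  (Num.min p1.1 p2.1 < p.1 < Num.max p1.1 p2.1) &&
  (Num.max p1.2 p2.2 < p.2 < p3.2).

(* Interior of the triangle with vertices a b c in R^2: the triangle is
   nondegenerate and q is a convex combination with strictly positive weights. *)
Definition in_triangle_interior (R : realFieldType) (a b c q : R * R) : Prop :=
  ((b.1 - a.1) * (c.2 - a.2) - (b.2 - a.2) * (c.1 - a.1) != 0) /\
  exists l1 l2 l3 : R, [/\ 0 < l1, 0 < l2, 0 < l3 & l1 + l2 + l3 = 1] /\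
     q.1 = l1 * a.1 + l2 * b.1 + l3 * c.1 /\
     q.2 = l1 * a.2 + l2 * b.2 + l3 * c.2.

(* Main.v *)
Require Import Defs.
From mathcomp Require Import all_boot all_order all_algebra ring lra zify.
Import Order.TTheory GRing.Theory Num.Theory.
Local Open Scope ring_scope.

Lemma core (R : realFieldType) (K a1 a2 a3 x h1 h2 h3 Y : R) :
  14 <= K -> 0 <= a1 -> a1 <= K -> 0 <= a2 -> a2 <= K -> 0 <= a3 -> a3 <= K ->
  a1 + 1 <= x -> x + 1 <= a2 -> 0 < h1 -> 0 < h2 ->
  2 * K * h1 <= Y -> 2 * K * h2 <= Y -> 2 * K * Y <= h3 ->
  in_triangle_interior (a1, h1) (a2, h2) (a3, h3) (x, Y).
Proof.
move=> HK A1 A1' A2 A2' A3 A3' Hx1 Hx2 H1 H2 HY1 HY2 HY3.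
have KY1 : K * h1 <= Y / 2 by lra.
have KY2 : K * h2 <= Y / 2 by lra.
have Yp : 0 < Y by nra.
have h1Y : h1 <= Y by nra.
have h2Y : h2 <= Y by nra.
have h3Y : 28 * Y <= h3 by nra.
have T1 : (a3 - a1) * (h2 - h1) <= Y / 2.
  case: (lerP a1 a3) => Ha.
    have : (a3 - a1) * (h2 - h1) <= (a3 - a1) * h2 by nra.
    nra.
  have : (a3 - a1) * (h2 - h1) <= (a1 - a3) * h1 by nra.
  nra.
set D := (a2 - a1) * (h3 - h1) - (h2 - h1) * (a3 - a1).
have Dp : 0 < D.
  rewrite /D; have : h3 - h1 <= (a2 - a1) * (h3 - h1) by nra.
  nra.
set N1 := (a3 - a2) * (Y - h2) + (h3 - h2) * (a2 - x).
set N2 := (a1 - a3) * (Y - h1) + (h3 - h1) * (x - a1).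
set N3 := (a2 - x) * (Y - h1) + (x - a1) * (Y - h2).
have N1p : 0 < N1.
  rewrite /N1; have : h3 - h2 <= (h3 - h2) * (a2 - x) by nra.
  have : - K * (Y - h2) <= (a3 - a2) * (Y - h2) by nra.
  nra.
have N2p : 0 < N2.
  rewrite /N2; have : h3 - h1 <= (h3 - h1) * (x - a1) by nra.
  have : - K * (Y - h1) <= (a1 - a3) * (Y - h1) by nra.
  nra.
have N3p : 0 < N3 by rewrite /N3; nra.
have Dn : D != 0 by rewrite gt_eqF.
split; first by rewrite /= -/D.
exists (N1 / D), (N2 / D), (N3 / D); split; first split.
- exact: divr_gt0.
- exact: divr_gt0.
- exact: divr_gt0.
- rewrite /N1 /N2 /N3 /D; field; exact Dn.
rewrite /= /N1 /N2 /N3; split; apply/eqP; rewrite -subr_eq0 /D; apply/eqP; field; exact Dn.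
Qed.

Lemma swap12 (R : realFieldType) (a b c q : R * R) :
  in_triangle_interior a b c q -> in_triangle_interior b a c q.
Proof.
move=> [HD [l1 [l2 [l3 [[P1 P2 P3 S] [E1 E2]]]]]]; split.
  apply: contra HD => /eqP H; apply/eqP.
  have -> : (b.1 - a.1) * (c.2 - a.2) - (b.2 - a.2) * (c.1 - a.1) =
    - ((a.1 - b.1) * (c.2 - b.2) - (a.2 - b.2) * (c.1 - b.1)) by ring.
  by rewrite H oppr0.
exists l2, l1, l3; split; first by split => //; rewrite -S; ring.
by rewrite E1 E2; split; ring.
Qed.

Lemma exp_step (R : realFieldType) (B : R) (m k : int) :
  1 <= B -> 0 <= m -> m < k -> B * B ^ m <= B ^ k.
Proof.
move=> HB Hm Hmk.
have [u Eu] : exists u : nat, m = u by exists `|m|%N; rewrite gez0_abs.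
have [v Ev] : exists v : nat, k = v by exists `|k|%N; rewrite gez0_abs //; lia.
subst m k.
rewrite -!exprnP -exprS.
have Huv : (u.+1 <= v)%N by move: Hmk; rewrite ltz_nat.
rewrite -(subnK Huv) exprD ler_peMl //; last exact: exprn_ege1.
apply: exprn_ge0; lra.
Qed.

Lemma cast_le (R : realFieldType) (u v : int) : u <= v -> (u%:~R : R) <= v%:~R.
Proof. by rewrite ler_int. Qed.

Theorem lemma8 (R : realFieldType) (n : nat) (p1 p2 p3 : int * int) :
  in_A n p1 -> in_A n p2 -> in_A n p3 ->
  Num.max p1.2 p2.2 < p3.2 ->
  forall p : int * int, in_A n p -> in_box p1 p2 p3 p ->
  in_triangle_interior (tau R n p1) (tau R n p2) (tau R n p3) (tau R n p).
Proof.
case: p1 p2 p3 => [a1 b1] [a2 b2] [a3 b3].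
rewrite /in_A /in_box /tau /=.
move=> /andP[/andP[A1 A1'] /andP[B1 B1']] /andP[/andP[A2 A2'] /andP[B2 B2']]
  /andP[/andP[A3 A3'] /andP[B3 B3']] Hm [x y] /andP[/andP[X X'] /andP[Y Y']].
move=> /andP[/andP[Hx1 Hx2] /andP[Hy1 Hy2]] /=.
simpl in *.
move: Hm Hy1; rewrite !gt_max => /andP[Hm1 Hm2] /andP[Hy1 Hy1'].
have n1 : (1 <= n)%N.
  rewrite lt0n; apply/eqP => n0; move: B1 B3' Hm1; rewrite n0 muln0 => *; lia.
set K : R := (14 * n)%:R.
have HK : 14 <= K by rewrite /K natrM ler_peMr // ler1n.
have HB : (28 * n)%:R = 2 * K :> R by rewrite /K -natrM mulnA.
have B1R : 1 <= (28 * n)%:R :> R by lra.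
have CK : forall u : int, 0 <= u <= (14 * n)%:Z -> 0 <= (u%:~R : R) <= K.
  move=> u /andP[u0 uK]; apply/andP; split; first by rewrite ler0z.
  by rewrite /K -(ler_int R) in uK.
have Hb : forall b c : int, 0 <= b -> b < c ->
   2 * K * ((28 * n)%:R ^ b) <= ((28 * n)%:R : R) ^ c.
  by move=> b c ? ?; rewrite -HB exp_step.
have pos : forall b : int, 0 <= b -> 0 < ((28 * n)%:R : R) ^ b.
  move=> b b0; have [u ->] : exists u : nat, b = u by exists `|b|%N; rewrite gez0_abs.
  rewrite -exprnP; apply: exprn_gt0; lra.
have := CK a1; rewrite A1 A1' => /(_ isT) /andP[C1 C1'].
have := CK a2; rewrite A2 A2' => /(_ isT) /andP[C2 C2'].
have := CK a3; rewrite A3 A3' => /(_ isT) /andP[C3 C3'].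
have [lt12|ge12] := ltP a1 a2.
  move: Hx1 Hx2; rewrite min_l ?max_r ?ltW // => Hx1 Hx2.
  have E1 : a1 + 1 <= x by lia.
  have E2 : x + 1 <= a2 by lia.
  have := @cast_le R _ _ E1; have := @cast_le R _ _ E2; rewrite !intrD => F2 F1.
  apply: (@core R K) => //; [exact: pos | exact: pos | exact: Hb | exact: Hb | apply: Hb; lia].
apply: swap12.
move: Hx1 Hx2; rewrite min_r ?max_l // => Hx1 Hx2.
have E1 : a2 + 1 <= x by lia.
have E2 : x + 1 <= a1 by lia.
have := @cast_le R _ _ E1; have := @cast_le R _ _ E2; rewrite !intrD => F2 F1.
apply: (@core R K) => //; [exact: pos | exact: pos | exact: Hb | exact: Hb | apply: Hb; lia].
Qed.
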